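(* Let $\Xi=(\xi_\sigma)_{\sigma\in[0,\omega_1)}$ be a strictly increasing transfinite sequence of countable ordinals, set $\xi_{\omega_1}=\omega_1$, and for each limit ordinal $\lambda\in[\omega,\omega_1]$ set $\zeta_\lambda=\sup\{\xi_\sigma:\sigma\in[0,\lambda)\}$. Then: (i) the map $U_\Xi$ given by $U_\Xi(\mathbf{1}_{[0,\sigma]})=\mathbf{1}_{[0,\xi_\sigma]}$ for $\sigma\in[0,\omega_1]$ extends uniquely to a linear isometry of $C([0,\omega_1])$ onto $\overline{\operatorname{span}}\{\mathbf{1}_{[0,\xi_\sigma]}:\sigma\in[0,\omega_1]\}$; (ii) $[0,\omega_1]=[0,\xi_0]\cup\bigcup_{\sigma\in[0,\omega_1)}[\xi_\sigma+1,\xi_{\sigma+1}]\cup\bigcup_{\lambda\in[\omega,\omega_1]\text{ limit}}[\zeta_\lambda,\xi_\lambda]$, where the intervals on the right-hand side are pairwise disjoint; (iii) the map $\varphi_\Xi\colon[0,\omega_1]\to[0,\omega_1]$ defined by $\varphi_\Xi(\alpha)=\xi_0$ for $\alpha\in[0,\xi_0]$, $\varphi_\Xi(\alpha)=\xi_{\sigma+1}$ for $\alpha\in[\xi_\sigma+1,\xi_{\sigma+1}]$ with $\sigma\in[0,\omega_1)$, and $\varphi_\Xi(\alpha)=\zeta_\lambda$ for $\alpha\in[\zeta_\lambda,\xi_\lambda]$ with $\lambda\in[\omega,\omega_1]$ a limit ordinal, is continuous and satisfies $\varphi_\Xi\circ\varphi_\Xi=\varphi_\Xi$; hence the composition operator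 $\Phi_\Xi\colon f\mapsto f\circ\varphi_\Xi$ is a contractive projection of $C([0,\omega_1])$ onto $\overline{\operatorname{span}}\{\mathbf{1}_{[0,\xi_\sigma]}:\sigma\in[0,\omega_1]\}$; (iv) the matrix of $\Phi_\Xi$ is given by $(\Phi_\Xi)_{\alpha,\beta}=\delta_{\beta,\xi_0}$ for $\alpha\in[0,\xi_0]$, $(\Phi_\Xi)_{\alpha,\beta}=\delta_{\beta,\xi_{\sigma+1}}$ for $\alpha\in[\xi_\sigma+1,\xi_{\sigma+1}]$ with $\sigma\in[0,\omega_1)$, and $(\Phi_\Xi)_{\alpha,\beta}=\delta_{\beta,\zeta_\lambda}$ for $\alpha\in[\zeta_\lambda,\xi_\lambda]$ with $\lambda\in[\omega,\omega_1]$ a limit ordinal.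
   Context: $\omega$ and $\omega_1$ are the first infinite and first uncountable ordinals; $[0,\omega_1]$ has the order topology and $C([0,\omega_1])$ is the Banach space of continuous scalar-valued functions on it with the sup norm; $0$ is considered a limit ordinal, but limits $\lambda$ above range over $[\omega,\omega_1]$. $\delta_{\alpha,\beta}$ is the Kronecker delta. The matrix of an operator $T$ on $C([0,\omega_1])$ is the unique family of scalars $T_{\alpha,\beta}$ with $\sum_\beta|T_{\alpha,\beta}|<\infty$ and $Tf(\alpha)=\sum_{\beta\in[0,\omega_1]}T_{\alpha,\beta}f(\beta)$ for all $f$ and $\alpha$. *)

(* Defs.v *)
From HB Require Import structures.
From mathcomp Require Import all_boot all_order all_algebra.
From mathcomp Require Import all_classical all_reals all_analysis.
Set Implicit Arguments. Unset Strict Implicit. Unset Printing Implicit Defensive.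
Import Order.TTheory GRing.Theory Num.Theory.
Import numFieldNormedType.Exports.
Local Open Scope classical_set_scope.
Local Open Scope ring_scope.

(* [0, omega_1] is modelled by an arbitrary totally ordered type T with
   a top element w1 such that the order is a well-order, every proper
   initial segment [0,a) with a < w1 is countable and [0,w1) is uncountable.
   Such an ordered type is order-isomorphic to the ordinal interval
   [0, omega_1]. *)
Section Omega1.
Context {d : Order.disp_t} (T : orderType d).

Definition omega1_like (w1 : T) : Prop :=
  well_founded (fun x y : T => (x < y)%O) /\
  (forall x : T, (x <= w1)%O) /\
  (forall a : T, (a < w1)%O -> countable [set b : T | (b < a)%O]) /\
  ~ countable [set b : T | (b < w1)%O].

Definition is_succ (s t : T) : Prop :=
  (s < t)%O /\ forall g : T, (s < g)%O -> (t <= g)%O.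

(* l is a nonzero limit ordinal (z0 is the least element 0) *)
Definition is_limit (z0 l : T) : Prop :=
  l <> z0 /\ ~ (exists s : T, is_succ s l).

Definition is_sup_below (xi : T -> T) (l z : T) : Prop :=
  (forall s : T, (s < l)%O -> (xi s <= z)%O) /\
  (forall u : T, (forall s : T, (s < l)%O -> (xi s <= u)%O) -> (z <= u)%O).

Inductive piece := Pzero | Psucc of T | Plim of T.

Definition valid_piece (z0 w1 : T) (p : piece) : Prop :=
  match p with
  | Pzero => True
  | Psucc s => (s < w1)%O
  | Plim l => is_limit z0 l
  end.

Definition in_piece (z0 : T) (xi : T -> T) (p : piece) (a : T) : Prop :=
  match p with
  | Pzero => (a <= xi z0)%O
  | Psucc s => exists t : T, is_succ s t /\ (xi s < a)%O /\ (a <= xi t)%O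
  | Plim l => exists z : T, is_sup_below xi l z /\ (z <= a)%O /\ (a <= xi l)%O
  end.

Definition phi_spec (z0 w1 : T) (xi : T -> T) (phi : T -> T) : Prop :=
  (forall a : T, (a <= xi z0)%O -> phi a = xi z0) /\
  (forall s t a : T, (s < w1)%O -> is_succ s t ->
      (xi s < a)%O -> (a <= xi t)%O -> phi a = xi t) /\
  (forall l z a : T, is_limit z0 l -> is_sup_below xi l z ->
      (z <= a)%O -> (a <= xi l)%O -> phi a = z).

Context (R : realType).

Definition Ccont (f : T -> R) : Prop :=
  continuous (f : order_topology T -> R).

Definition supn (f : T -> R) : R := sup (range (fun x => `|f x|)).

Definition ind0 (a : T) : T -> R := fun x => if (x <= a)%O then 1 else 0.

Definition delta (b c : T) : R := if b == c then 1 else 0.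

Definition in_span (xi : T -> T) (g : T -> R) : Prop :=
  exists (n : nat) (c : 'I_n -> R) (s : 'I_n -> T),
    g = (fun x => \sum_(i < n) c i * ind0 (xi (s i)) x).

Definition in_cspan (xi : T -> T) (g : T -> R) : Prop :=
  Ccont g /\ forall e : R, 0 < e ->
    exists h, in_span xi h /\ supn (fun x => g x - h x) <= e.

Definition linear_on_C (U : (T -> R) -> (T -> R)) : Prop :=
  (forall f, Ccont f -> Ccont (U f)) /\
  (forall (a : R) f g, Ccont f -> Ccont g ->
     U (fun x => a * f x + g x) = (fun x => a * U f x + U g x)).

Definition lin_isometry_C (U : (T -> R) -> (T -> R)) : Prop :=
  linear_on_C U /\ (forall f, Ccont f -> supn (U f) = supn f).

(* unordered (absolutely convergent) sums over T *)
Definition abs_summable (a : T -> R) : Prop :=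
  exists M : R, forall F : seq T, uniq F -> \sum_(b <- F) `|a b| <= M.

Definition has_usum (a : T -> R) (s : R) : Prop :=
  forall e : R, 0 < e -> exists F0 : seq T, forall F : seq T,
    uniq F -> {subset F0 <= F} -> `|\sum_(b <- F) a b - s| <= e.

Definition is_matrix (P : (T -> R) -> (T -> R)) (M : T -> T -> R) : Prop :=
  forall a : T, abs_summable (M a) /\
    forall f, Ccont f -> has_usum (fun b => M a b * f b) (P f a).

End Omega1.

(* Main.v *)
Require Import Defs.
From HB Require Import structures.
From mathcomp Require Import all_boot all_order all_algebra.
From mathcomp Require Import all_classical all_reals all_analysis.
From mathcomp Require Import ring lra.
Set Implicit Arguments. Unset Strict Implicit. Unset Printing Implicit Defensive.
Import Order.TTheory GRing.Theory Num.Theory.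
Import numFieldNormedType.Exports.
Local Open Scope classical_set_scope.
Local Open Scope ring_scope.




Section Ord.
Context {d : Order.disp_t} {T : orderType d} (z0 w1 : T)
  (hz0 : forall x : T, (z0 <= x)%O) (hT : omega1_like w1).
Local Open Scope order_scope.

Lemma wf_lt : well_founded (fun x y : T => x < y).
Proof. by case: hT. Qed.

Lemma le_w1 (x : T) : x <= w1.
Proof. by case: hT => _ []. Qed.

Lemma min_ex (P : T -> Prop) : (exists x, P x) ->
  exists x, P x /\ forall y, P y -> x <= y.
Proof.
move=> [x Px]; apply: contrapT => H.
suff : forall y, ~ P y by move/(_ x).
apply: (well_founded_ind wf_lt) => y IH Py; apply: H; exists y; split => // z Pz.
rewrite leNgt; apply/negP => zy; exact: IH z zy Pz.
Qed.

Lemma succ_ex (x : T) : x < w1 -> exists t, is_succ x t.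
Proof.
move=> xw; have [t [xt tmin]] := min_ex (ex_intro (fun t => x < t) w1 xw).
by exists t; split.
Qed.

Lemma succ_le (s t u : T) : is_succ s t -> s < u -> t <= u.
Proof. by case=> _; apply. Qed.

Lemma succ_between (s t u : T) : is_succ s t -> s < u -> u < t -> False.
Proof. by move=> st su ut; have := succ_le st su; rewrite leNgt ut. Qed.

Lemma succ_pred_uniq (s s' t : T) : is_succ s t -> is_succ s' t -> s = s'.
Proof.
move=> st s't; case: (ltgtP s s') => // H.
- by exfalso; apply: (succ_between st H); case: s't.
- by exfalso; apply: (succ_between s't H); case: st.
Qed.

Lemma w1_not_succ (s : T) : ~ is_succ s w1.
Proof.
move=> [sw smin]; case: hT => _ [_ [hc hu]]; apply: hu.
have := hc _ sw => cs.
apply: (@sub_countable _ _ _ (\bigcup_(i in [set: bool]) (if i then [set b | b < s] else [set s]))).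
  apply: subset_card_le => b /= bw; have [bs|sb|->] := ltgtP b s.
  - by exists true.
  - by have := smin _ sb; rewrite leNgt bw.
  - by exists false.
by apply: bigcup_countable; [exact: countableP | case => _ //; exact: countable1].
Qed.

Lemma w1_neq_z0 : w1 <> z0.
Proof.
move=> e; case: hT => _ [_ [_ hu]]; apply: hu.
suff -> : [set b : T | b < w1] = set0 by exact: countable0.
by apply/seteqP; split => b //=; rewrite e ltNge hz0.
Qed.

Lemma w1_limit : is_limit z0 w1.
Proof. split; [exact: w1_neq_z0|by move=> [s]; apply: w1_not_succ]. Qed.

Lemma classify (r : T) : r = z0 \/ (exists s, is_succ s r) \/ is_limit z0 r.
Proof.
have [->|rz] := eqVneq r z0; first by left.
right; have [H|H] := pselect (exists s, is_succ s r); first by left.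
by right; split => //; apply/eqP.
Qed.

Lemma limit_between (l s : T) : is_limit z0 l -> s < l -> exists u, s < u /\ u < l.
Proof.
move=> [lz ls] sl; have sw : s < w1 by apply: lt_le_trans sl (le_w1 _).
have [t st] := succ_ex sw; exists t; split; first by case: st.
have := succ_le st sl; rewrite le_eqVlt => /orP[/eqP e|//].
by exfalso; apply: ls; exists s; rewrite -e.
Qed.

Lemma limit_gt_z0 (l : T) : is_limit z0 l -> z0 < l.
Proof. by case=> lz _; rewrite lt_neqAle hz0 andbT eq_sym; apply/eqP. Qed.

Lemma sup_ex (xi : T -> T) (l : T) : exists z, is_sup_below xi l z.
Proof.
have [z [zu zmin]] := min_ex (ex_intro (fun u => forall s, s < l -> xi s <= u) w1
  (fun s _ => le_w1 (xi s))).
by exists z; split.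
Qed.

End Ord.




Definition psi {d} {T : orderType d} (w1 : T) (xi : T -> T) (x : T) : T :=
  xget w1 (fun s => (x <= xi s)%O /\ forall t, (x <= xi t)%O -> (s <= t)%O).

Section Xi.
Context {d : Order.disp_t} (T : orderType d) (z0 w1 : T)
  (hz0 : forall x : T, (z0 <= x)%O) (hT : omega1_like w1)
  (xi : T -> T)
  (hxi_lt : forall s : T, (s < w1)%O -> (xi s < w1)%O)
  (hxi_inc : forall s t : T, (s < t)%O -> (t < w1)%O -> (xi s < xi t)%O)
  (hxi_top : xi w1 = w1).
Local Open Scope order_scope.

Lemma xi_strict s t : s < t -> xi s < xi t.
Proof.
move=> st; have := le_w1 hT t; rewrite le_eqVlt => /orP[/eqP tw|]; last exact: hxi_inc.
by rewrite tw hxi_top; apply: hxi_lt; rewrite -tw.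
Qed.

Lemma xi_le s t : s <= t -> xi s <= xi t.
Proof. by rewrite le_eqVlt => /orP[/eqP->//|/xi_strict/ltW]. Qed.

Lemma xi_leE s t : (xi s <= xi t) = (s <= t).
Proof.
apply/idP/idP; last exact: xi_le.
by rewrite !leNgt; apply: contraNN => /xi_strict.
Qed.

Lemma psi_spec x : x <= xi (psi w1 xi x) /\ forall t, x <= xi t -> psi w1 xi x <= t.
Proof.
apply: (xgetPex w1 (P := fun s => (x <= xi s)%O /\ forall t, (x <= xi t)%O -> (s <= t)%O)).
have hw : x <= xi w1 by rewrite hxi_top; exact: le_w1.
have := min_ex hT (ex_intro (fun s => x <= xi s) w1 hw).
by move=> [s [? ?]]; exists s.
Qed.

Lemma psi_leE x s : (psi w1 xi x <= s) = (x <= xi s).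
Proof.
have [h1 h2] := psi_spec x; apply/idP/idP; last exact: h2.
by move=> ps; apply: le_trans h1 _; apply: xi_le.
Qed.

Lemma psi_ltE x s : (s < psi w1 xi x) = (xi s < x).
Proof. by rewrite !ltNge psi_leE. Qed.


Lemma psi_mono x y : x <= y -> psi w1 xi x <= psi w1 xi y.
Proof. by move=> xy; rewrite psi_leE; apply: le_trans xy _; case: (psi_spec y). Qed.

Lemma le_xi_psi x : x <= xi (psi w1 xi x).
Proof. by case: (psi_spec x). Qed.

Lemma psi_xi s : psi w1 xi (xi s) = s.
Proof. by apply/eqP; rewrite eq_le psi_leE lexx /= -xi_leE le_xi_psi. Qed.

Lemma sup_lim_gt l z s : is_limit z0 l -> is_sup_below xi l z -> s < l -> xi s < z.
Proof.
move=> ll [zu _] sl; have [u [su ul]] := limit_between hT ll sl.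
by apply: lt_le_trans (xi_strict su) (zu _ ul).
Qed.

Lemma sup_le_xi l z : is_sup_below xi l z -> z <= xi l.
Proof. by case=> _; apply => s sl; apply/ltW/xi_strict. Qed.

Lemma psi_Pzero a : a <= xi z0 -> psi w1 xi a = z0.
Proof. by move=> h; apply/eqP; rewrite eq_le hz0 andbT psi_leE. Qed.

Lemma psi_Psucc s t a : is_succ s t -> xi s < a -> a <= xi t -> psi w1 xi a = t.
Proof.
move=> st sa at_; apply/eqP; rewrite eq_le psi_leE at_ /=.
by apply: (succ_le st); rewrite psi_ltE.
Qed.

Lemma psi_Plim l z a : is_limit z0 l -> is_sup_below xi l z -> z <= a -> a <= xi l ->
  psi w1 xi a = l.
Proof.
move=> ll lz za al; apply/eqP; rewrite eq_le psi_leE al /= leNgt; apply/negP => pl.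
have := sup_lim_gt ll lz pl; rewrite ltNge => /negP; apply.
by apply: le_trans za _; apply: le_xi_psi.
Qed.

Lemma part_ii_cover a : exists p, valid_piece z0 w1 p /\ in_piece z0 xi p a.
Proof.
set r := psi w1 xi a.
have ar : a <= xi r by apply: le_xi_psi.
have below : forall u, u < r -> xi u < a by move=> u; rewrite psi_ltE.
case: (classify z0 r) => [rz|[[s sr]|rl]].
- by exists (Pzero T); split => //=; rewrite -rz.
- exists (Psucc s); split => /=.
    by apply: lt_le_trans (le_w1 hT r); case: sr.
  by exists r; split => //; split => //; apply: below; case: sr.
- have [z rz] := sup_ex hT xi r.
  exists (Plim r); split => //=; exists z; split => //; split => //.
  by case: rz => _; apply => s sr; apply/ltW/below.
Qed.

Lemma part_ii_disj (p q : piece T) (a : T) : valid_piece z0 w1 p -> valid_piece z0 w1 q ->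
     in_piece z0 xi p a -> in_piece z0 xi q a -> p = q.
Proof.
have key : forall p, valid_piece z0 w1 p -> in_piece z0 xi p a ->
   (p = Pzero T /\ psi w1 xi a = z0) \/
   (exists s, p = Psucc s /\ is_succ s (psi w1 xi a)) \/
   (p = Plim (psi w1 xi a) /\ is_limit z0 (psi w1 xi a)).
  case => [|s|l] /= vp.
  - by move=> h; left; split => //; apply: psi_Pzero.
  - move=> [t [st [sa at_]]]; right; left; exists s; split => //.
    by rewrite (psi_Psucc st sa at_).
  - move=> [z [lz [za al]]]; right; right; by rewrite (psi_Plim vp lz za al).
move=> vp vq ip iq.
have nsz : forall s, ~ is_succ s z0.
  by move=> s [sz _]; move: sz; rewrite ltNge hz0.
case: (key p vp ip) => [[-> e]|[[s [-> sp]]|[-> lp]]];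
case: (key q vq iq) => [[-> e']|[[s' [-> sq]]|[-> lq]]] //.
- by exfalso; apply: (nsz s'); rewrite -e.
- by exfalso; case: lq => + _; rewrite e.
- by exfalso; apply: (nsz s); rewrite -e'.
- by rewrite (succ_pred_uniq sp sq).
- by exfalso; case: lq => _; apply; exists s.
- by exfalso; case: lp => + _; rewrite e'.
- by exfalso; case: lp => _; apply; exists s'.
Qed.

End Xi.




Section Topo.
Context {d : Order.disp_t} {T : orderType d} (z0 w1 : T)
  (hz0 : forall x : T, (z0 <= x)%O) (hT : omega1_like w1).
Local Open Scope order_scope.
Local Notation oT := (order_topology T).

Lemma onbhs_gt (c x : T) : c < x -> nbhs (x : oT) [set y : T | c < y].
Proof.
move=> cx; apply: open_nbhs_nbhs; split.
  have -> : [set y : T | c < y] = [set` `]c, +oo[%O] :> set oT.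
    by apply/seteqP; split => y /=; rewrite in_itv /= andbT.
  exact: rray_open.
done.
Qed.

Lemma onbhs_le (x : T) : nbhs (x : oT) [set y : T | y <= x].
Proof.
have := le_w1 hT x; rewrite le_eqVlt => /orP[/eqP xw|xw].
  have -> : [set y : T | y <= x] = setT by apply/seteqP; split => y //= _; rewrite xw le_w1.
  exact: filterT.
have [t [xt tmin]] := succ_ex hT xw.
apply: open_nbhs_nbhs; split.
  have -> : [set y : T | y <= x] = [set` `]-oo, t[%O] :> set oT.
    apply/seteqP; split => y /=; rewrite in_itv /=.
      by move=> yx; apply: le_lt_trans yx xt.
    by move=> yt; rewrite leNgt; apply/negP => /tmin; rewrite leNgt yt.
  exact: lray_open.
by rewrite /= lexx.
Qed.

Lemma onbhs_Ioc (c x : T) : c < x -> nbhs (x : oT) [set y : T | c < y <= x].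
Proof.
move=> cx; apply: filterS (filterI (onbhs_gt cx) (onbhs_le x)).
by move=> y [] /= -> ->.
Qed.

Lemma onbhs_inv (x : T) (U : set T) : nbhs (x : oT) U -> x != z0 ->
  exists c, c < x /\ forall y, c < y -> y <= x -> U y.
Proof.
rewrite order_nbhs_itv => -[i [oi xi] iU] xz.
have z0x : z0 < x by rewrite lt_neqAle eq_sym xz hz0.
move: oi xi iU; case: i => [[[] l|[]] [[] r|[]]] //= _.
- rewrite in_itv /= => /andP[lx xr] iU; exists l; split => // y ly yx.
  by apply: iU => /=; rewrite in_itv /= ly (le_lt_trans yx xr).
- rewrite in_itv /= => /andP[lx _] iU; exists l; split => // y ly yx.
  by apply: iU => /=; rewrite in_itv /= ly.
- rewrite in_itv /= => xr iU; exists z0; split => // y ly yx.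
  by apply: iU => /=; rewrite in_itv /= (le_lt_trans yx xr).
- move=> _ iU; exists z0; split => // y _ _.
  by apply: iU => /=; rewrite in_itv.
Qed.

Lemma nbhs_z0_inv (U : set T) : nbhs (z0 : oT) U -> U z0.
Proof. exact: nbhs_singleton. Qed.

Lemma cont_oT (f : T -> T) :
  (forall x c, c < f x -> exists2 c', (c' < x) \/ x = z0 &
     forall y, (c' < y \/ x = z0) -> y <= x -> c < f y /\ f y <= f x) ->
  (forall x, f x = z0 -> nbhs (x : oT) [set y | f y = z0]) ->
  continuous (f : oT -> oT).
Proof.
move=> H H0 x U /=; rewrite nbhs_simpl /= => nU.
have [fz|fz] := eqVneq (f x) z0.
  apply: filterS (H0 _ fz) => y /= fy; rewrite fy.
  by have := nbhs_singleton nU; rewrite fz.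
have [c [cfx cU]] := onbhs_inv nU fz.
have [c' hc' Hy] := H x c cfx.
case: hc' => [c'x|xz].
  apply: filterS (onbhs_Ioc c'x) => y /= /andP[c'y yx].
  by have [] := Hy y (or_introl c'y) yx; apply: cU.
apply: filterS (onbhs_le x) => y /= yx.
by have [] := Hy y (or_intror xz) yx; apply: cU.
Qed.

End Topo.




Section Real.
Context (R : realType) {d : Order.disp_t} {T : orderType d} (z0 w1 : T)
  (hz0 : forall x : T, (z0 <= x)%O) (hT : omega1_like w1).
Local Notation oT := (order_topology T).

Lemma CcontP (f : T -> R) : Ccont f <->
  forall x e, 0 < e -> nbhs (x : oT) [set y | `|f x - f y| <= e].
Proof.
rewrite /Ccont; split => [H x e e0 | H x].
  exact: ((@cvgrPdist_le _ _ _ _ (nbhs_filter (x : oT)) f (f x)).1 (H x) e e0).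
by apply/(@cvgrPdist_le _ _ _ _ (nbhs_filter (x : oT)) f (f x)) => e e0; apply: H.
Qed.

Lemma lc_cont (f : T -> R) : (forall x, nbhs (x : oT) [set y | f y = f x]) -> Ccont f.
Proof.
move=> H; apply/CcontP => x e e0; apply: filterS (H x) => y /= ->.
by rewrite subrr normr0 ltW.
Qed.

Lemma lc_ind0 (s x : T) : nbhs (x : oT) [set y | ind0 R s y = ind0 R s x].
Proof.
rewrite /ind0; have [xs|sx] := leP x s.
  by apply: filterS (onbhs_le hT x) => y /= yx; rewrite (le_trans yx xs).
by apply: filterS (onbhs_gt sx) => y /= sy; rewrite leNgt sy.
Qed.

Lemma span_lc (xi : T -> T) (h : T -> R) : in_span xi h ->
  forall x, nbhs (x : oT) [set y | h y = h x].
Proof.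
move=> [n [c [s ->]]] x.
have F := @filter_forall _ _ (fun i : 'I_n => [set y | ind0 R (xi (s i)) y = ind0 R (xi (s i)) x])
   (nbhs (x : oT)) (nbhs_filter (x : oT)) (fun i => lc_ind0 (xi (s i)) x).
by apply: filterS F => y /= H; apply: eq_bigr => i _; rewrite H.
Qed.

Lemma span_cont (xi : T -> T) (h : T -> R) : in_span xi h -> Ccont h.
Proof. by move=> /span_lc; apply: lc_cont. Qed.

Lemma ind0_cont (s : T) : Ccont (ind0 R s).
Proof. by apply: lc_cont => x; apply: lc_ind0. Qed.

Lemma span_add (xi : T -> T) (g h : T -> R) : in_span xi g -> in_span xi h ->
  in_span xi (fun x => g x + h x).
Proof.
move=> [m [c1 [s1 ->]]] [n [c2 [s2 ->]]].
exists (m + n)%N, (fun i => match fintype.split i with inl j => c1 j | inr k => c2 k end),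
  (fun i => match fintype.split i with inl j => s1 j | inr k => s2 k end).
apply: funext => x; rewrite big_split_ord /=.
congr (_ + _); apply: eq_bigr => i _.
  by rewrite (unsplitK (inl _ i)).
by rewrite (unsplitK (inr _ i)).
Qed.

Lemma span_scale (xi : T -> T) (a : R) (g : T -> R) : in_span xi g ->
  in_span xi (fun x => a * g x).
Proof.
move=> [n [c [s ->]]]; exists n, (fun i => a * c i), s.
by apply: funext => x; rewrite mulr_sumr; apply: eq_bigr => i _; rewrite mulrA.
Qed.

Lemma span_ind (xi : T -> T) (s : T) : in_span xi (ind0 R (xi s)).
Proof.
exists 1%N, (fun _ => 1), (fun _ => s); apply: funext => x.
by rewrite big_ord1 mul1r.
Qed.

Lemma span_ind_id (s : T) : in_span (fun t => t) (ind0 R s).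
Proof. exact: (span_ind (fun t => t) s). Qed.

Lemma ind0_min (a c x : T) : ind0 R (Order.min a c) x = ind0 R a x * ind0 R c x.
Proof.
rewrite /ind0 le_min; case: (x <= a)%O; case: (x <= c)%O => /=;
  by rewrite ?mulr1 ?mulr0 ?mul0r.
Qed.

Lemma span_mulind (g : T -> R) (c : T) : in_span (fun t => t) g ->
  in_span (fun t => t) (fun x => g x * ind0 R c x).
Proof.
move=> [n [cc [s ->]]]; exists n, cc, (fun i => Order.min (s i) c).
apply: funext => x; rewrite mulr_suml; apply: eq_bigr => i _.
by rewrite ind0_min mulrA.
Qed.

Lemma le_z0 (y : T) : (y <= z0)%O -> y = z0.
Proof. by move=> yz; apply/le_anti; rewrite yz hz0. Qed.

Lemma cont_bounded (f : T -> R) : Ccont f -> exists B, forall x, `|f x| <= B.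
Proof.
move=> /CcontP fc.
suff : forall x, exists B, forall y, (y <= x)%O -> `|f y| <= B.
  by move=> /(_ w1) [B HB]; exists B => y; apply: HB; apply: le_w1.
apply: (well_founded_ind (wf_lt hT)) => x IH.
have [->|xz] := eqVneq x z0.
  by exists `|f z0| => y /le_z0 ->.
have [c [cx Hc]] := onbhs_inv hz0 (fc x 1 ltr01) xz.
have [B HB] := IH c cx.
exists (Num.max B (`|f x| + 1)) => y yx.
have [yc|cy] := leP y c.
  by rewrite le_max HB.
rewrite le_max; apply/orP; right.
have := Hc y cy yx; rewrite /= => h.
have -> : f y = f x - (f x - f y) by ring.
by apply: le_trans (ler_normB _ _) _; rewrite lerD2l.
Qed.

Lemma supn_ub (f : T -> R) : (exists B, forall x, `|f x| <= B) ->
  forall x, `|f x| <= supn f.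
Proof.
move=> [B HB] x; apply: ub_le_sup; last by exists x.
by exists B => _ [y _ <-].
Qed.

Lemma supn_le (f : T -> R) (e : R) : (forall x, `|f x| <= e) -> supn f <= e.
Proof.
move=> H; apply: ge_sup; first by exists `|f z0|, z0.
by move=> _ [y _ <-].
Qed.

Lemma approx_span (f : T -> R) (e : R) : Ccont f -> 0 < e ->
  exists h, in_span (fun t => t) h /\ forall y, `|f y - h y| <= e.
Proof.
move=> /CcontP fc e0.
suff : forall x, exists h, in_span (fun t => t) h /\
    forall y, (y <= x)%O -> `|f y - h y| <= e.
  by move=> /(_ w1) [h [sh Hh]]; exists h; split => // y; apply: Hh; apply: le_w1.
apply: (well_founded_ind (wf_lt hT)) => x IH.
have [->|xz] := eqVneq x z0.
  exists (fun y => f z0 * ind0 R z0 y); split; first exact/span_scale/span_ind_id.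
  by move=> y /le_z0 ->; rewrite /ind0 lexx mulr1 subrr normr0 ltW.
have [c [cx Hc]] := onbhs_inv hz0 (fc x e e0) xz.
have [h [sh Hh]] := IH c cx.
exists (fun y => h y * ind0 R c y + (f x * ind0 R x y + (- f x) * ind0 R c y)).
split.
  apply: span_add; first exact: span_mulind.
  by apply: span_add; apply/span_scale/span_ind_id.
move=> y yx; have [yc|cy] := leP y c.
  have yx' : (y <= x)%O by apply: le_trans yc (ltW cx).
  have -> : h y * ind0 R c y + (f x * ind0 R x y + - f x * ind0 R c y) = h y.
    by rewrite /ind0 yc yx'; ring.
  exact: Hh.
have -> : h y * ind0 R c y + (f x * ind0 R x y + - f x * ind0 R c y) = f x.
  by rewrite /ind0 yx leNgt cy /=; ring.
rewrite distrC; exact: Hc y cy yx.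
Qed.

End Real.




Section Ops.
Context (R : realType) {d : Order.disp_t} {T : orderType d} (z0 w1 : T)
  (hz0 : forall x : T, (z0 <= x)%O) (hT : omega1_like w1).
Local Notation oT := (order_topology T).

Lemma cont_lin (a : R) (f g : T -> R) : Ccont f -> Ccont g ->
  Ccont (fun x => a * f x + g x).
Proof.
move=> cf cg x.
apply: (@cvgD _ _ _ (nbhs (x : oT)) (nbhs_filter (x : oT)) (fun x => a * f x) g).
  exact: (@cvgMl_tmp _ _ (nbhs (x : oT)) (nbhs_filter (x : oT)) f a (f x) (cf x)).
exact: cg.
Qed.

Lemma cont_cst (a : R) : Ccont (fun _ : T => a).
Proof. by apply: lc_cont => x; apply: filterS (@filterT _ _ (nbhs_filter (x : oT))). Qed.

Lemma zero_of_small (a : R) : (forall e, 0 < e -> `|a| <= e + e) -> a = 0.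
Proof.
move=> H; apply/normr0_eq0; apply/le_anti; rewrite normr_ge0 andbT.
apply/ler_addgt0Pr => e e0; rewrite add0r.
have := H (e / 2) (divr_gt0 e0 (ltr0n _ 2)).
by have -> : e / 2 + e / 2 = e by field.
Qed.

Lemma cspan_pt (xi : T -> T) (g : T -> R) : in_cspan xi g ->
  forall e, 0 < e -> exists h, in_span xi h /\ forall y, `|g y - h y| <= e.
Proof.
move=> [cg H] e e0; have [h [sh she]] := H e e0; exists h; split => // y.
apply: le_trans she; apply: (supn_ub (f := fun x => g x - h x)).
have [B1 HB1] := cont_bounded hz0 hT cg.
have [B2 HB2] := cont_bounded hz0 hT (span_cont hT sh).
exists (B1 + B2) => x; apply: le_trans (ler_normB _ _) _; exact: lerD.
Qed.

Lemma unif_cont (k : T -> R) :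
  (forall e, 0 < e -> exists h, Ccont h /\ forall y, `|k y - h y| <= e) -> Ccont k.
Proof.
move=> H; apply/CcontP => x e e0.
have e30 : 0 < e / 3 by apply: divr_gt0.
have [h [ch hk]] := H _ e30.
have /CcontP := ch => /(_ x _ e30) nh.
apply: filterS nh => y /= hy.
have -> : k x - k y = (k x - h x) + (h x - h y) - (k y - h y) by ring.
apply: le_trans (ler_normB _ _) _; apply: le_trans (lerD (ler_normD _ _) (lexx _)) _.
have := hk x; have := hk y; move: hy.
set A := `|k x - h x|; set B := `|h x - h y|; set C := `|k y - h y|.
move=> h1 h2 h3; lra.
Qed.

Lemma cspan_inv (xi p : T -> T) (g : T -> R) : in_cspan xi g ->
  (forall h : T -> R, in_span xi h -> h \o p = h) -> g \o p = g.
Proof.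
move=> cg H; apply: funext => y /=; apply/eqP; rewrite -subr_eq0; apply/eqP.
apply: zero_of_small => e e0.
have [h [sh Hh]] := cspan_pt cg e0.
have hp := congr1 (fun F => F y) (H h sh); rewrite /= in hp.
have -> : g (p y) - g y = (g (p y) - h (p y)) - (g y - h y) by rewrite hp; ring.
by apply: le_trans (ler_normB _ _) _; apply: lerD.
Qed.

Lemma lin_zero (V : (T -> R) -> (T -> R)) : linear_on_C V -> V (fun _ => 0) = (fun _ => 0).
Proof.
move=> [_ lV]; have c0 : Ccont (fun _ : T => 0 : R) by exact: cont_cst.
have := lV 1 (fun _ => 0) (fun _ => 0) c0 c0.
have -> : (fun _ : T => 1 * 0 + 0) = (fun _ => 0 : R) by apply: funext => x; ring.
move=> e; apply: funext => x; have := congr1 (fun F => F x) e => /= h.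
lra.
Qed.

Lemma lin_span (V1 V2 : (T -> R) -> (T -> R)) : linear_on_C V1 -> linear_on_C V2 ->
  (forall s, V1 (ind0 R s) = V2 (ind0 R s)) ->
  forall h : T -> R, in_span (fun t => t) h -> V1 h = V2 h.
Proof.
move=> l1 l2 H h [n [c [s ->]]]; elim: n c s => [|n IH] c s.
  have -> : (fun x => \sum_(i < 0) c i * ind0 R (s i) x) = (fun _ => 0).
    by apply: funext => x; rewrite big_ord0.
  by rewrite (lin_zero l1) (lin_zero l2).
have -> : (fun x => \sum_(i < n.+1) c i * ind0 R (s i) x) =
  (fun x => c ord_max * ind0 R (s ord_max) x +
     (fun x => \sum_(i < n) c (widen_ord (leqnSn n) i) * ind0 R (s (widen_ord (leqnSn n) i)) x) x).
  by apply: funext => x; rewrite big_ord_recr /= addrC.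
have cs : Ccont (fun x => \sum_(i < n) c (widen_ord (leqnSn n) i) * ind0 R (s (widen_ord (leqnSn n) i)) x).
  by apply: (span_cont hT (xi := fun t => t)); exists n, (fun i => c (widen_ord (leqnSn n) i)),
    (fun i => s (widen_ord (leqnSn n) i)).
rewrite l1.2 ?l2.2 //; try exact: (ind0_cont hT).
by rewrite H IH.
Qed.

Lemma lin_unique (V1 V2 : (T -> R) -> (T -> R)) : lin_isometry_C V1 -> lin_isometry_C V2 ->
  (forall s, V1 (ind0 R s) = V2 (ind0 R s)) ->
  forall f, Ccont f -> V1 f = V2 f.
Proof.
move=> [l1 i1] [l2 i2] H f cf; apply: funext => y.
apply/eqP; rewrite -subr_eq0; apply/eqP; apply: zero_of_small => e e0.
have [h [sh Hh]] := approx_span hz0 hT cf e0.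
have sp := lin_span l1 l2 H sh.
have ch : Ccont h := span_cont hT sh.
have cD : Ccont (fun x => -1 * h x + f x) by apply: cont_lin.
have h2 : supn (fun x => -1 * h x + f x) <= e.
  apply: (supn_le z0) => x.
  by rewrite mulN1r addrC; apply: Hh.
have bnd : forall V, linear_on_C V -> (forall f, Ccont f -> supn (V f) = supn f) ->
    `|V f y - V h y| <= e.
  move=> V lV iV.
  have e1 := lV.2 (-1) h f ch cf.
  have h1 := supn_ub (cont_bounded hz0 hT (lV.1 _ cD)) y.
  rewrite iV // e1 mulN1r addrC in h1.
  exact: le_trans h1 h2.
have -> : V1 f y - V2 f y = (V1 f y - V1 h y) - (V2 f y - V2 h y) by rewrite sp; ring.
by apply: le_trans (ler_normB _ _) _; apply: lerD; apply: bnd.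
Qed.

End Ops.




Section Main.
Context (R : realType) {d : Order.disp_t} {T : orderType d} (z0 w1 : T)
  (hz0 : forall x : T, (z0 <= x)%O) (hT : omega1_like w1)
  (xi : T -> T)
  (hxi_lt : forall s : T, (s < w1)%O -> (xi s < w1)%O)
  (hxi_inc : forall s t : T, (s < t)%O -> (t < w1)%O -> (xi s < xi t)%O)
  (hxi_top : xi w1 = w1).
Local Notation oT := (order_topology T).
Local Notation ps := (psi w1 xi).

Let psiLE := psi_leE hT hxi_lt hxi_inc hxi_top.
Let psiLT := psi_ltE hT hxi_lt hxi_inc hxi_top.
Let psiM := psi_mono hT hxi_lt hxi_inc hxi_top.
Let lexps := le_xi_psi hT hxi_top.
Let psixi := psi_xi hT hxi_lt hxi_inc hxi_top.
Let supgt := sup_lim_gt (z0:=z0) hT hxi_lt hxi_inc hxi_top.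
Let suple := sup_le_xi hT hxi_lt hxi_inc hxi_top.
Let xiLE := xi_leE hT hxi_lt hxi_inc hxi_top.
Let xiS := xi_strict hT hxi_lt hxi_inc hxi_top.

Lemma Ccont_comp (f : T -> R) (p : T -> T) : continuous (p : oT -> oT) -> Ccont f ->
  Ccont (f \o p).
Proof. by move=> cp cf x; apply: continuous_comp (cp x) (cf (p x)). Qed.

Lemma psi_cont : continuous (ps : oT -> oT).
Proof.
apply: (cont_oT hz0 hT).
  move=> x c cx; exists (xi c); first by left; rewrite -psiLT.
  move=> y [cy|xz] yx; last first.
    have : (xi c < x)%O by rewrite -psiLT.
    by rewrite xz ltNge hz0.
  split; first by rewrite psiLT.
  exact: psiM.
move=> x px; apply: filterS (onbhs_le hT x) => y /= yx.
by apply: (le_z0 hz0); rewrite -px; apply: psiM.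
Qed.

Lemma ind0_psi (s x : T) : ind0 R s (ps x) = ind0 R (xi s) x.
Proof. by rewrite /ind0 psiLE. Qed.

Lemma ind0_xi (s x : T) : ind0 R (xi s) (xi x) = ind0 R s x.
Proof. by rewrite /ind0 xiLE. Qed.

Lemma U_cspan (k : T -> R) : Ccont k -> in_cspan xi (k \o ps).
Proof.
move=> ck; split; first exact: Ccont_comp psi_cont ck.
move=> e e0; have [h [[n [c [s hE]]] Hh]] := approx_span hz0 hT ck e0.
exists (fun x => \sum_(i < n) c i * ind0 R (xi (s i)) x); split.
  by exists n, c, s.
apply: (supn_le z0) => x /=.
have -> : \sum_(i < n) c i * ind0 R (xi (s i)) x = h (ps x).
  by rewrite hE; apply: eq_bigr => i _; rewrite ind0_psi.
exact: Hh.
Qed.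

Lemma span_psi_inv (h : T -> R) : in_span xi h -> h \o (xi \o ps) = h.
Proof.
move=> [n [c [s ->]]]; apply: funext => x /=; apply: eq_bigr => i _.
by rewrite ind0_xi ind0_psi.
Qed.

Lemma part_i : exists U : (T -> R) -> (T -> R),
     lin_isometry_C U /\
     (forall s : T, U (ind0 R s) = ind0 R (xi s)) /\
     (forall f, Ccont f -> in_cspan xi (U f)) /\
     (forall g, in_cspan xi g -> exists f, Ccont f /\ U f = g) /\
     (forall V : (T -> R) -> (T -> R), lin_isometry_C V ->
        (forall s : T, V (ind0 R s) = ind0 R (xi s)) ->
        forall f, Ccont f -> V f = U f).
Proof.
have Uiso : lin_isometry_C (fun f : T -> R => f \o ps).
  split; first split.
  - by move=> f cf; apply: Ccont_comp psi_cont cf.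
  - by [].
  move=> f cf; rewrite /supn; congr sup; apply/seteqP; split => _ [y _ <-] /=.
    by exists (ps y).
  by exists (xi y) => //; rewrite psixi.
have Uind : forall s : T, (ind0 R s) \o ps = ind0 R (xi s).
  by move=> s; apply: funext => x /=; rewrite ind0_psi.
exists (fun f => f \o ps); split => //; split => //; split.
  exact: U_cspan.
split.
  move=> g cg; exists (g \o xi); split.
    apply: unif_cont => e e0; have [h [sh Hh]] := cspan_pt hz0 hT cg e0.
    exists (h \o xi); split.
      move: sh => [n [c [s ->]]]; apply: (span_cont hT (xi := fun t => t)).
      by exists n, c, s; apply: funext => x /=; apply: eq_bigr => i _; rewrite ind0_xi.
    by move=> y; apply: Hh.
  exact: (cspan_inv hz0 hT cg span_psi_inv).
move=> V iV HV f cf; apply: (lin_unique hz0 hT iV Uiso) => // s.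
by rewrite HV Uind.
Qed.

End Main.




Section Phi.
Context {d : Order.disp_t} {T : orderType d} (z0 w1 : T)
  (hz0 : forall x : T, (z0 <= x)%O) (hT : omega1_like w1)
  (xi : T -> T)
  (hxi_lt : forall s : T, (s < w1)%O -> (xi s < w1)%O)
  (hxi_inc : forall s t : T, (s < t)%O -> (t < w1)%O -> (xi s < xi t)%O)
  (hxi_top : xi w1 = w1)
  (phi : T -> T) (hphi : phi_spec z0 w1 xi phi).
Local Notation oT := (order_topology T).
Local Notation ps := (psi w1 xi).
Local Open Scope order_scope.

Let psiLE := psi_leE hT hxi_lt hxi_inc hxi_top.
Let psiLT := psi_ltE hT hxi_lt hxi_inc hxi_top.
Let psiM := psi_mono hT hxi_lt hxi_inc hxi_top.
Let lexps := le_xi_psi hT hxi_top.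
Let psixi := psi_xi hT hxi_lt hxi_inc hxi_top.
Let supgt := sup_lim_gt (z0:=z0) hT hxi_lt hxi_inc hxi_top.
Let suple := sup_le_xi hT hxi_lt hxi_inc hxi_top.
Let xiLE := xi_leE hT hxi_lt hxi_inc hxi_top.
Let xiS := xi_strict hT hxi_lt hxi_inc hxi_top.

Definition jj (r : T) := phi (xi r).

Lemma jj_z0 : jj z0 = xi z0.
Proof. by case: hphi => h1 _; rewrite /jj; apply: h1. Qed.

Lemma jj_succ s r : is_succ s r -> jj r = xi r.
Proof.
move=> sr; case: hphi => _ [h2 _]; rewrite /jj; apply: (h2 s) => //.
- by apply: lt_le_trans (le_w1 hT r); case: sr.
- by apply: xiS; case: sr.
Qed.

Lemma jj_lim r z : is_limit z0 r -> is_sup_below xi r z -> jj r = z.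
Proof.
move=> rl rz; case: hphi => _ [_ h3]; rewrite /jj; apply: (h3 r z (xi r) rl rz) => //; exact: (suple rz).
Qed.

Lemma jj_le r : jj r <= xi r.
Proof.
case: (classify z0 r) => [->|[[s sr]|rl]]; first by rewrite jj_z0.
  by rewrite (jj_succ sr).
have [z rz] := sup_ex hT xi r; rewrite (jj_lim rl rz); exact: (suple rz).
Qed.

Lemma jj_gt t r : t < r -> xi t < jj r.
Proof.
move=> tr; case: (classify z0 r) => [rz|[[s sr]|rl]].
- by move: tr; rewrite rz ltNge hz0.
- by rewrite (jj_succ sr); apply: xiS.
- have [z rz] := sup_ex hT xi r; rewrite (jj_lim rl rz); exact: (supgt rl rz tr).
Qed.

Lemma phi_jj x : phi x = jj (ps x).
Proof.
set r := ps x; have xr : x <= xi r by apply: lexps.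
have below : forall u, u < r -> xi u < x by move=> u; rewrite psiLT.
case: hphi => h1 [h2 h3].
case: (classify z0 r) => [rz|[[s sr]|rl]].
- by rewrite rz jj_z0; apply: h1; rewrite -rz.
- rewrite (jj_succ sr); apply: (h2 s) => //.
    by apply: lt_le_trans (le_w1 hT r); case: sr.
  by apply: below; case: sr.
- have [z rz] := sup_ex hT xi r; rewrite (jj_lim rl rz); apply: (h3 r z x rl rz) => //.
  by case: rz => _; apply => u ur; apply/ltW/below.
Qed.

Lemma psi_jj r : ps (jj r) = r.
Proof.
apply/eqP; rewrite eq_le psiLE jj_le /= leNgt; apply/negP => H.
have := jj_gt H; rewrite ltNge => /negP; apply; exact: lexps.
Qed.

Lemma jj_mono y r : y <= r -> jj y <= jj r.
Proof.
rewrite le_eqVlt => /orP[/eqP->//|yr].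
by apply: le_trans (jj_le y) _; apply/ltW/jj_gt.
Qed.

Lemma jj_cont : continuous (jj : oT -> oT).
Proof.
apply: (cont_oT hz0 hT).
  move=> r c cr; case: (classify z0 r) => [rz|[[s sr]|rl]].
  - exists z0; first by right.
    by move=> y _ yr; move: yr; rewrite rz => /(le_z0 hz0) ->; rewrite -rz.
  - exists s; first by left; case: sr.
    move=> y [sy|rz] yr.
      by have := succ_le sr sy => ry; have -> : y = r by apply/le_anti; rewrite ry yr.
    by exfalso; case: sr; rewrite rz ltNge hz0.
  - have [z rz] := sup_ex hT xi r; rewrite (jj_lim rl rz) in cr.
    have [t [tr ct]] : exists t, t < r /\ c < xi t.
      apply: contrapT => H; have : z <= c.
        case: rz => _; apply => t tr; rewrite leNgt; apply/negP => ct; apply: H.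
        by exists t.
      by rewrite leNgt cr.
    exists t; first by left.
    move=> y [ty|rz0] yr.
      by split; [apply: lt_trans ct (jj_gt ty) | apply: jj_mono].
    by exfalso; move: tr; rewrite rz0 ltNge hz0.
move=> r jr; have [rz|rz] := eqVneq r z0.
  apply: filterS (onbhs_le hT r) => y /= yr.
  by have -> : y = r by rewrite rz; apply: (le_z0 hz0); rewrite -rz.
exfalso; have : z0 < r by rewrite lt_neqAle eq_sym rz hz0.
move=> /jj_gt; rewrite jr ltNge; move/negP; apply; exact: hz0.
Qed.

End Phi.




Section PhiR.
Context (R : realType) {d : Order.disp_t} {T : orderType d} (z0 w1 : T)
  (hz0 : forall x : T, (z0 <= x)%O) (hT : omega1_like w1)
  (xi : T -> T)
  (hxi_lt : forall s : T, (s < w1)%O -> (xi s < w1)%O)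
  (hxi_inc : forall s t : T, (s < t)%O -> (t < w1)%O -> (xi s < xi t)%O)
  (hxi_top : xi w1 = w1)
  (phi : T -> T) (hphi : phi_spec z0 w1 xi phi).
Local Notation oT := (order_topology T).
Local Notation ps := (psi w1 xi).

Let psiLE := psi_leE hT hxi_lt hxi_inc hxi_top.
Let pcont := psi_cont hz0 hT hxi_lt hxi_inc hxi_top.
Let jcont := jj_cont hz0 hT hxi_lt hxi_inc hxi_top hphi.
Let phijj := phi_jj hT hxi_lt hxi_inc hxi_top hphi.
Let psijj := psi_jj hz0 hT hxi_lt hxi_inc hxi_top hphi.

Lemma phi_eq : phi = jj xi phi \o ps.
Proof. by apply: funext => x; rewrite phijj. Qed.

Lemma phi_cont : continuous (phi : oT -> oT).
Proof.
move=> x; rewrite phi_eq; exact: (continuous_comp (@pcont x) (@jcont (ps x))). Qed.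

Lemma phi_idem : phi \o phi = phi.
Proof. by apply: funext => x /=; rewrite [phi (phi x)]phijj [phi x]phijj psijj. Qed.

Lemma part_iii_a :
     let Phi := fun f : T -> R => f \o phi in
     continuous (phi : order_topology T -> order_topology T) /\
     phi \o phi = phi /\
     linear_on_C Phi /\
     (forall f, Ccont f -> supn (Phi f) <= supn f) /\
     (forall f, Ccont f -> Phi (Phi f) = Phi f) /\
     (forall f, Ccont f -> in_cspan xi (Phi f)) /\
     (forall g, in_cspan xi g -> exists f, Ccont f /\ Phi f = g).
Proof.
move=> Phi; split; first exact: phi_cont.
split; first exact: phi_idem.
split.
  split; last by [].
  by move=> f cf; apply: Ccont_comp phi_cont cf.
split.
  move=> f cf; apply: sup_le.
  - by move=> _ [y _ <-]; exists `|f (phi y)| => //; exists (phi y).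
  - by exists `|f (phi z0)|, z0.
  - split; first by exists `|f z0|, z0.
    have [B HB] := cont_bounded hz0 hT cf.
    by exists B => _ [y _ <-].
split.
  by move=> f cf; rewrite /Phi -compA phi_idem.
split.
  move=> f cf; rewrite /Phi phi_eq compA.
  apply: (U_cspan hz0 hT hxi_lt hxi_inc hxi_top).
  exact: Ccont_comp jcont cf.
move=> g cg; exists g; split; first by case: cg.
apply: (cspan_inv hz0 hT cg) => h [n [c [s ->]]].
apply: funext => x /=; apply: eq_bigr => i _; congr (_ * _).
by rewrite /ind0 phijj -!psiLE psijj.
Qed.

End PhiR.




Section Mat.
Context (R : realType) {d : Order.disp_t} {T : orderType d} (z0 w1 : T)
  (hz0 : forall x : T, (z0 <= x)%O) (hT : omega1_like w1).

Lemma sum_delta (F : seq T) (c : T) (g : T -> R) : uniq F ->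
  \sum_(b <- F) delta R b c * g b = (c \in F)%:R * g c.
Proof.
elim: F => [|x F IH] /=; first by rewrite big_nil mul0r.
move=> /andP[xF uF]; rewrite big_cons IH // in_cons /delta.
have [<-|xc] := eqVneq x c.
  by rewrite (negbTE xF) /=; ring.
by rewrite /=; ring.
Qed.

Lemma matrix_ex (phi : T -> T) :
  is_matrix (fun f : T -> R => f \o phi) (fun a b => delta R b (phi a)).
Proof.
move=> a; split.
  exists 1 => F uF.
  have -> : \sum_(b <- F) `|delta R b (phi a)| = \sum_(b <- F) delta R b (phi a) * 1.
    by apply: eq_bigr => b _; rewrite mulr1 /delta; case: (b == phi a); rewrite ?normr1 ?normr0.
  rewrite sum_delta // mulr1; case: (phi a \in F) => /=; first exact: lexx.
  exact: ler01.
move=> f cf e e0; exists [:: phi a] => F uF sF.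
rewrite sum_delta // (sF (phi a)) ?mem_head //= mul1r subrr normr0.
exact: ltW.
Qed.

Lemma tail_small (m : T -> R) : abs_summable m -> forall e, 0 < e ->
  exists F, uniq F /\ forall H, uniq H -> (forall y, y \in H -> y \notin F) ->
    \sum_(y <- H) `|m y| <= e.
Proof.
move=> [B HB] e e0.
pose S := [set x : R | exists F : seq T, uniq F /\ x = \sum_(y <- F) `|m y|].
have hS : has_sup S.
  split; first by exists 0, [::]; rewrite big_nil.
  by exists B => _ [F [uF ->]]; apply: HB.
have [_ [F [uF ->]] lt] := sup_adherent e0 hS.
exists F; split => // H uH dH.
have uFH : uniq (F ++ H).
  rewrite cat_uniq uF uH andbT /=; apply/hasPn => y yH; exact: dH.
have : \sum_(y <- F ++ H) `|m y| <= sup S.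
  by apply: sup_upper_bound => //; exists (F ++ H).
rewrite big_cat /= => h; lra.
Qed.

Lemma coef_est (m : T -> R) (F : seq T) (b c : T) (f : T -> R) (e : R) :
  (forall H, uniq H -> (forall y, y \in H -> y \notin F) -> \sum_(y <- H) `|m y| <= e) ->
  has_usum (fun y => m y * f y) (f c) ->
  0 < e ->
  f b = 1 -> (forall y, y \in F -> y != b -> f y = 0) -> (forall y, `|f y| <= 1) ->
  `|m b - f c| <= e + e.
Proof.
move=> tl hu e0 fb fF f1.
have [F0 HF0] := hu e e0.
set G := undup (F0 ++ F ++ [:: b]).
have uG : uniq G by apply: undup_uniq.
have bG : b \in G by rewrite mem_undup !mem_cat mem_head !orbT.
have sG : {subset F0 <= G} by move=> y yF0; rewrite mem_undup mem_cat yF0.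
have h1 := HF0 G uG sG.
rewrite (bigD1_seq b bG uG) /= fb mulr1 in h1.
set Q := \sum_(y <- G | y != b) m y * f y in h1.
have hQ : `|Q| <= e.
  apply: le_trans (ler_norm_sum _ _ _) _.
  apply: (le_trans _ (tl [seq y <- G | (y != b) && (y \notin F)] _ _)).
  - rewrite big_filter big_mkcond [X in _ <= X]big_mkcond /=.
    apply: ler_sum => y _.
    case: (eqVneq y b) => //= yb.
    case: (boolP (y \in F)) => yF /=.
      by rewrite fF // mulr0 normr0.
    by rewrite normrM; apply: ler_piMr => //; apply: f1.
  - exact: filter_uniq.
  - by move=> y; rewrite mem_filter => /andP[/andP[]].
have -> : m b - f c = (m b + Q - f c) - Q by ring.
by apply: le_trans (ler_normB _ _) _; apply: lerD.
Qed.

End Mat.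




Section Mat2.
Context (R : realType) {d : Order.disp_t} {T : orderType d} (z0 w1 : T)
  (hz0 : forall x : T, (z0 <= x)%O) (hT : omega1_like w1).

Definition below_max (b : T) (L : seq T) : T :=
  foldr (fun y acc => if (y < b)%O then Order.max y acc else acc) z0 L.

Lemma below_max_lt b L : (z0 < b)%O -> (below_max b L < b)%O.
Proof.
move=> zb; elim: L => [|y L IH] //=.
by case: ifP => // yb; rewrite gt_max yb IH.
Qed.

Lemma below_max_ge b L y : y \in L -> (y < b)%O -> (y <= below_max b L)%O.
Proof.
elim: L => [|x L IH] //=; rewrite in_cons => /orP[/eqP->|yL] yb.
  by rewrite yb le_max lexx.
have := IH yL yb; case: ifP => // _ h; by rewrite le_max h orbT.
Qed.

Lemma exists_bump (b : T) (L : seq T) : exists f : T -> R,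
  Ccont f /\ f b = 1 /\ (forall y, y \in L -> f y = (y == b)%:R) /\ forall y, `|f y| <= 1.
Proof.
have [bz|bz] := eqVneq b z0.
  exists (ind0 R z0); split; first exact: (ind0_cont hT).
  split; first by rewrite /ind0 bz lexx.
  split.
    move=> y _; rewrite /ind0 bz; case: ifP => [/(le_z0 hz0) ->|yz]; first by rewrite eqxx.
    by case: eqVneq yz => // ->; rewrite lexx.
  by move=> y; rewrite /ind0; case: ifP; rewrite ?normr1 ?normr0 ?ler01.
have zb : (z0 < b)%O by rewrite lt_neqAle eq_sym bz hz0.
set c := below_max b L.
have cb : (c < b)%O by apply: below_max_lt.
exists (fun y => -1 * ind0 R c y + ind0 R b y); split.
  by apply: cont_lin; apply: (ind0_cont hT).
have fb : -1 * ind0 R c b + ind0 R b b = 1.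
  by rewrite /ind0 lexx leNgt cb /=; ring.
split => //; split.
  move=> y yL; have [->|yb] := eqVneq y b; first by rewrite fb.
  rewrite /=; have [ylb|bly] := ltP y b.
    by rewrite /ind0 (below_max_ge yL ylb) (ltW ylb); ring.
  have byy : (b < y)%O by rewrite lt_neqAle eq_sym yb bly.
  have yc : (y <= c)%O = false by rewrite leNgt (lt_trans cb byy).
  have ybf : (y <= b)%O = false by rewrite leNgt byy.
  by rewrite /ind0 yc ybf; ring.
move=> y; rewrite /ind0; case: ifP => yc.
  rewrite (le_trans yc (ltW cb)).
  have -> : -1 * 1 + 1 = 0 :> R by ring.
  by rewrite normr0 ler01.
case: ifP => _.
  have -> : -1 * 0 + 1 = 1 :> R by ring.
  by rewrite normr1.
have -> : -1 * 0 + 0 = 0 :> R by ring.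
by rewrite normr0 ler01.
Qed.

Lemma matrix_unique (phi : T -> T) (M : T -> T -> R) :
  is_matrix (fun f : T -> R => f \o phi) M -> forall a b, M a b = delta R b (phi a).
Proof.
move=> HM a b; have [hs hu] := HM a; set c := phi a.
apply/eqP; rewrite -subr_eq0; apply/eqP; apply: zero_of_small => e e0.
have [F [uF tl]] := tail_small hs e0.
have [f [cf [fb [fL f1]]]] := exists_bump b (c :: F).
have fc : f c = delta R b c.
  by rewrite fL ?mem_head // /delta eq_sym; case: (b == c).
rewrite -fc; apply: (coef_est tl (hu f cf) e0 fb _ f1).
by move=> y yF yb; rewrite fL ?in_cons ?yF ?orbT // (negbTE yb).
Qed.

End Mat2.


Theorem lemma3p2 (R : realType) (d : Order.disp_t) (T : orderType d)
  (z0 w1 : T) (hz0 : forall x : T, (z0 <= x)%O) (hT : omega1_like w1)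
  (xi : T -> T)
  (hxi_lt : forall s : T, (s < w1)%O -> (xi s < w1)%O)
  (hxi_inc : forall s t : T, (s < t)%O -> (t < w1)%O -> (xi s < xi t)%O)
  (hxi_top : xi w1 = w1) :
  (* (i) *)
  (exists U : (T -> R) -> (T -> R),
     lin_isometry_C U /\
     (forall s : T, U (ind0 R s) = ind0 R (xi s)) /\
     (forall f, Ccont f -> in_cspan xi (U f)) /\
     (forall g, in_cspan xi g -> exists f, Ccont f /\ U f = g) /\
     (forall V : (T -> R) -> (T -> R), lin_isometry_C V ->
        (forall s : T, V (ind0 R s) = ind0 R (xi s)) ->
        forall f, Ccont f -> V f = U f)) /\
  (* (ii) *)
  (forall a : T, exists p, valid_piece z0 w1 p /\ in_piece z0 xi p a) /\
  (forall (p q : piece T) (a : T), valid_piece z0 w1 p -> valid_piece z0 w1 q ->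
     in_piece z0 xi p a -> in_piece z0 xi q a -> p = q) /\
  (* (iii) and (iv) *)
  (forall phi : T -> T, phi_spec z0 w1 xi phi ->
     let Phi := fun f : T -> R => f \o phi in
     continuous (phi : order_topology T -> order_topology T) /\
     phi \o phi = phi /\
     linear_on_C Phi /\
     (forall f, Ccont f -> supn (Phi f) <= supn f) /\
     (forall f, Ccont f -> Phi (Phi f) = Phi f) /\
     (forall f, Ccont f -> in_cspan xi (Phi f)) /\
     (forall g, in_cspan xi g -> exists f, Ccont f /\ Phi f = g) /\
     (exists M, is_matrix Phi M) /\
     (forall M, is_matrix Phi M -> forall a b : T,
        ((a <= xi z0)%O -> M a b = delta R b (xi z0)) /\
        (forall s t : T, (s < w1)%O -> is_succ s t ->
           (xi s < a)%O -> (a <= xi t)%O -> M a b = delta R b (xi t)) /\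
        (forall l z : T, is_limit z0 l -> is_sup_below xi l z ->
           (z <= a)%O -> (a <= xi l)%O -> M a b = delta R b z))).
Proof.
split; first exact: (part_i R hz0 hT hxi_lt hxi_inc hxi_top).
split; first exact: (part_ii_cover z0 hT hxi_lt hxi_inc hxi_top).
split; first exact: (part_ii_disj hz0 hT hxi_lt hxi_inc hxi_top).
move=> phi hphi Phi.
have [c [i [l [ct [id [cs su]]]]]] := part_iii_a R hz0 hT hxi_lt hxi_inc hxi_top hphi.
do 7 (split; first by []).
split; first by exists (fun a b => delta R b (phi a)); exact: matrix_ex.
move=> M HM a b; rewrite (matrix_unique hz0 hT HM a b).
case: hphi => h1 [h2 h3].
split; first by move=> ha; rewrite h1.
split; first by move=> s t sw st sa at_; rewrite (h2 s t a).
by move=> l0 z lz lz' za al; rewrite (h3 l0 z a).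
Qed.
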